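(* For every regex $R \in \mathrm{RE}^{\#}$ there exist regexes $A, B, E \in \mathrm{RE}_c$ (lookaround-free) such that $$R \equiv (?{<}{=}B)\cdot E\cdot (?{=}A),$$ i.e. for every span $\sigma$ (in every string), $\sigma \models R$ iff $\sigma \models (?{<}{=}B)\cdot E\cdot(?{=}A)$.
   Context: Let $\Sigma$ be a (possibly infinite) set of characters and $\Psi$ an effective Boolean algebra of predicates over $\Sigma$: each $\psi\in\Psi$ has a denotation $[\![\psi]\!]\subseteq\Sigma$, $\Psi$ contains $\bot,\top$ with $[\![\bot]\!]=\emptyset$, $[\![\top]\!]=\Sigma$, and is closed under $\vee,\wedge,\neg$ with the set-theoretic meaning. For a string $s\in\Sigma^*$, a location in $s$ is a pair $(s,i)$ with $0\le i\le |s|$; it is initial if $i=0$, final if $i=|s|$; for nonfinal $(s,i)$, $\mathrm{head}((s,i))=s_i$ (the $i$-th character, 0-indexed). A span in $s$ is a pair $\sigma=((s,i),(s,j))$ with $i\le j$; its width is $j-i$; write $\sigma.1=(s,i)$, $\sigma.2=(s,j)$. The class RE of regexes is given by the grammar $R ::= \psi \mid \varepsilon \mid R_1|R_2 \mid R_1\& R_2 \mid R_1\cdot R_2 \mid R^{\{m\}} \mid R^* \mid {\sim}R \mid (?{<}{=}R) \mid (?{<}!R) \mid (?{=}R) \mid (?!R)$ with $\psi\in\Psi$, $m\ge1$ an integer, and $R^{\{0\}}:=\varepsilon$. Semantics ($\sigma\models R$, all locations $x$ range over locations of the same string $s$, and pairs $(x,y)$ are required to be spans, i.e. $x$ not after $y$):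 $\sigma\models\varepsilon$ iff width $0$; $\sigma\models\psi$ iff width $1$ and $\mathrm{head}(\sigma.1)\in[\![\psi]\!]$; $|$, $\&$, ${\sim}$ are union, intersection and complement (over spans); $\sigma\models L\cdot R$ iff $\exists x:(\sigma.1,x)\models L$ and $(x,\sigma.2)\models R$; $\sigma\models R^{\{m\}}$ iff $\exists x:(\sigma.1,x)\models R$ and $(x,\sigma.2)\models R^{\{m-1\}}$; $\sigma\models R^*$ iff $\exists m\ge0:\sigma\models R^{\{m\}}$; $\sigma\models(?{=}R)$ iff width $0$ and $\exists x:(\sigma.1,x)\models R$; $\sigma\models(?!R)$ iff width $0$ and no such $x$ exists; $\sigma\models(?{<}{=}R)$ iff width $0$ and $\exists x:(x,\sigma.2)\models R$; $\sigma\models(?{<}!R)$ iff width $0$ and no such $x$ exists. For a location $x$, $x\models R$ means $(x,x)\models R$. $R\equiv S$ means the two regexes are matched by exactly the same spans (in all strings). Define $\backslash A := (?{<}!\top)$ (matches exactly at initial locations) and $\backslash z := (?!\top)$ (matches exactly at final locations), and $\_* := \top^*$. $\mathrm{RE}_c$ (lookaround-free regexes) is given by $E ::= \backslash A \mid \backslash z \mid \psi\mid\varepsilon\mid E_1|E_2\mid E_1\& E_2\mid E_1\cdot E_2\mid E^{\{m\}}\mid E^*\mid {\sim}E$. $\mathrm{RE}^{\#}$ is given by $R ::= E \mid R_1\& R_2 \mid (?{<}{=}E)\cdot R \mid (?{<}!E)\cdot R \mid R\cdot(?{=}E)\mid R\cdot(?!E)$ with $E\in\mathrm{RE}_c$.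 *)

(* Defs.v *)
From Stdlib Require Import List Arith.
Import ListNotations.
Set Implicit Arguments.

Record EBA (Sigma : Type) := {
  pred_ty : Type;
  den : pred_ty -> Sigma -> Prop;
  pbot : pred_ty;
  ptop : pred_ty;
  por : pred_ty -> pred_ty -> pred_ty;
  pand : pred_ty -> pred_ty -> pred_ty;
  pnot : pred_ty -> pred_ty;
  den_bot : forall c, ~ den pbot c;
  den_top : forall c, den ptop c;
  den_or : forall p q c, den (por p q) c <-> den p c \/ den q c;
  den_and : forall p q c, den (pand p q) c <-> den p c /\ den q c;
  den_not : forall p c, den (pnot p) c <-> ~ den p c;
  sat_dec : forall p, {exists c, den p c} + {~ exists c, den p c}
}.

Section Regex.
Variable Sigma : Type.
Variable A : EBA Sigma.

Inductive regex : Type :=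
| RPred : pred_ty A -> regex
| REps : regex
| RAlt : regex -> regex -> regex
| RInter : regex -> regex -> regex
| RCat : regex -> regex -> regex
| RRep : nat -> regex -> regex
| RStar : regex -> regex
| RCompl : regex -> regex
| RLookBehind : regex -> regex
| RNegLookBehind : regex -> regex
| RLookAhead : regex -> regex
| RNegLookAhead : regex -> regex.

Fixpoint repP (P : nat -> nat -> Prop) (len m i j : nat) : Prop :=
  match m with
  | 0 => i = j /\ j <= len
  | S k => exists x, i <= x <= j /\ P i x /\ repP P len k x j
  end.

(* sem R s i j : the span ((s,i),(s,j)) matches R.  Every satisfied
   instance is a genuine span: i <= j <= |s|. *)
Fixpoint sem (R : regex) (s : list Sigma) (i j : nat) : Prop :=
  match R with
  | RPred p => j = S i /\ exists c, nth_error s i = Some c /\ den A p c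
  | REps => i = j /\ j <= length s
  | RAlt R1 R2 => sem R1 s i j \/ sem R2 s i j
  | RInter R1 R2 => sem R1 s i j /\ sem R2 s i j
  | RCat R1 R2 => exists x, i <= x <= j /\ sem R1 s i x /\ sem R2 s x j
  | RRep m R1 => repP (sem R1 s) (length s) m i j
  | RStar R1 => exists m, repP (sem R1 s) (length s) m i j
  | RCompl R1 => i <= j /\ j <= length s /\ ~ sem R1 s i j
  | RLookBehind R1 =>
      i = j /\ j <= length s /\ exists x, x <= j /\ sem R1 s x j
  | RNegLookBehind R1 =>
      i = j /\ j <= length s /\ ~ exists x, x <= j /\ sem R1 s x j
  | RLookAhead R1 =>
      i = j /\ j <= length s /\ exists x, i <= x <= length s /\ sem R1 s i x
  | RNegLookAhead R1 =>
      i = j /\ j <= length s /\ ~ exists x, i <= x <= length s /\ sem R1 s i x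
  end.

Definition RStart : regex := RNegLookBehind (RPred (ptop A)).
Definition REnd : regex := RNegLookAhead (RPred (ptop A)).

Inductive is_REc : regex -> Prop :=
| c_start : is_REc RStart
| c_end : is_REc REnd
| c_pred : forall p, is_REc (RPred p)
| c_eps : is_REc REps
| c_alt : forall E1 E2, is_REc E1 -> is_REc E2 -> is_REc (RAlt E1 E2)
| c_inter : forall E1 E2, is_REc E1 -> is_REc E2 -> is_REc (RInter E1 E2)
| c_cat : forall E1 E2, is_REc E1 -> is_REc E2 -> is_REc (RCat E1 E2)
| c_rep : forall m E, 1 <= m -> is_REc E -> is_REc (RRep m E)
| c_star : forall E, is_REc E -> is_REc (RStar E)
| c_compl : forall E, is_REc E -> is_REc (RCompl E).

Inductive is_REsharp : regex -> Prop :=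
| s_c : forall E, is_REc E -> is_REsharp E
| s_inter : forall R1 R2, is_REsharp R1 -> is_REsharp R2 -> is_REsharp (RInter R1 R2)
| s_lb : forall E R, is_REc E -> is_REsharp R -> is_REsharp (RCat (RLookBehind E) R)
| s_nlb : forall E R, is_REc E -> is_REsharp R -> is_REsharp (RCat (RNegLookBehind E) R)
| s_la : forall E R, is_REc E -> is_REsharp R -> is_REsharp (RCat R (RLookAhead E))
| s_nla : forall E R, is_REc E -> is_REsharp R -> is_REsharp (RCat R (RNegLookAhead E)).

Definition requiv (R S : regex) : Prop :=
  forall (s : list Sigma) (i j : nat), sem R s i j <-> sem S s i j.

End Regex.

Arguments RStart {Sigma A}.
Arguments REnd {Sigma A}.

(* Main.v *)
Require Import Defs.
From Stdlib Require Import List Arith Lia.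
Import ListNotations.

Section S.
Variable Sigma : Type.
Variable Alg : EBA Sigma.

Lemma repP_bound (P : nat -> nat -> Prop) len m : forall i j,
  repP P len m i j -> i <= j <= len.
Proof.
  induction m as [|m IH]; simpl; intros i j H.
  - lia.
  - destruct H as [x [Hx [_ H]]]. apply IH in H. lia.
Qed.

Lemma sem_bound (R : regex Alg) : forall s i j, sem R s i j -> i <= j <= length s.
Proof.
  induction R; simpl; intros s i j H; try lia.
  - destruct H as [-> [c [Hc _]]].
    assert (i < length s) by (apply nth_error_Some; congruence). lia.
  - destruct H as [H|H]; eauto.
  - destruct H as [H _]; eauto.
  - destruct H as [x [Hx [H1 H2]]]. apply IHR1 in H1. apply IHR2 in H2. lia.
  - eapply repP_bound; eauto.
  - destruct H as [m H]. eapply repP_bound; eauto.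
Qed.

Definition T : regex Alg := RStar (RPred Alg (ptop Alg)).

Lemma topstar s : forall d y, y + d <= length s -> sem T s y (y + d).
Proof.
  intros d. unfold T; simpl. induction d as [|d IH]; intros y Hy.
  - exists 0. simpl. split; lia.
  - destruct (IH (S y)) as [m Hm]; [lia|]. exists (S m). simpl.
    exists (S y). split; [lia|]. split.
    + split; [reflexivity|].
      destruct (nth_error s y) eqn:E.
      * exists s0. split; [reflexivity|]. apply den_top.
      * apply nth_error_None in E. lia.
    + replace (y + S d) with (S y + d) by lia. exact Hm.
Qed.

Lemma topstar' s y w : y <= w -> w <= length s -> sem T s y w.
Proof.
  intros H1 H2. replace w with (y + (w - y)) by lia. apply topstar. lia.
Qed.

Definition LB (B : regex Alg) s i := exists x, x <= i /\ sem B s x i.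
Definition LA (A : regex Alg) s j := exists y, j <= y <= length s /\ sem A s j y.

Definition andB B1 B2 : regex Alg := RInter (RCat T B1) (RCat T B2).
Definition andA A1 A2 : regex Alg := RInter (RCat A1 T) (RCat A2 T).
Definition notB E : regex Alg := RCat RStart (RCompl (RCat T E)).
Definition notA E : regex Alg := RCat (RCompl (RCat E T)) REnd.

Lemma start_sem s x y : sem (@RStart _ Alg) s x y <-> x = 0 /\ y = 0.
Proof.
  unfold RStart; simpl. split.
  - intros [-> [Hl Hn]]. destruct y as [|y]; [lia|]. exfalso. apply Hn.
    exists y. split; [lia|]. split; [reflexivity|].
    destruct (nth_error s y) eqn:E.
    + exists s0. split; [reflexivity|]. apply den_top.
    + apply nth_error_None in E. lia.
  - intros [-> ->]. split; [reflexivity|]. split; [lia|].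
    intros [z [_ [H _]]]. discriminate.
Qed.

Lemma end_sem s x y : sem (@REnd _ Alg) s x y <-> x = y /\ y = length s.
Proof.
  unfold REnd; simpl. split.
  - intros [-> [Hl Hn]]. split; [reflexivity|].
    destruct (Nat.eq_dec y (length s)) as [e|ne]; [exact e|]. exfalso. apply Hn.
    exists (S y). split; [lia|]. split; [reflexivity|].
    destruct (nth_error s y) eqn:E.
    + exists s0. split; [reflexivity|]. apply den_top.
    + apply nth_error_None in E. lia.
  - intros [-> ->]. split; [reflexivity|]. split; [lia|].
    intros [w [Hw [-> _]]]. lia.
Qed.

Lemma LB_and B1 B2 s i : i <= length s ->
  (LB (andB B1 B2) s i <-> LB B1 s i /\ LB B2 s i).
Proof.
  intros Hi. unfold LB, andB; simpl. split.
  - intros [x [Hx [[y1 [H1 [_ B1']]] [y2 [H2 [_ B2']]]]]].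
    split; [exists y1|exists y2]; split; auto; lia.
  - intros [[x1 [H1 B1']] [x2 [H2 B2']]]. exists 0. split; [lia|]. split.
    + exists x1. split; [lia|]. split; auto. apply topstar'; lia.
    + exists x2. split; [lia|]. split; auto. apply topstar'; lia.
Qed.

Lemma LA_and A1 A2 s j :
  (LA (andA A1 A2) s j <-> LA A1 s j /\ LA A2 s j).
Proof.
  unfold LA, andA; simpl. split.
  - intros [y [Hy [[z1 [H1 [A1' _]]] [z2 [H2 [A2' _]]]]]].
    split; [exists z1|exists z2]; split; auto; lia.
  - intros [[y1 [H1 A1']] [y2 [H2 A2']]]. exists (length s). split; [lia|]. split.
    + exists y1. split; [lia|]. split; auto. apply topstar'; lia.
    + exists y2. split; [lia|]. split; auto. apply topstar'; lia.
Qed.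

Lemma LB_not E s i : i <= length s -> (LB (notB E) s i <-> ~ LB E s i).
Proof.
  intros Hi. unfold LB, notB; simpl. split.
  - intros [x [Hx [z [Hz [Hs [_ [_ Hn]]]]]]]. apply start_sem in Hs.
    destruct Hs as [-> ->]. intros [x' [Hx' HE]]. apply Hn.
    exists x'. split; [lia|]. split; auto. apply topstar'; lia.
  - intros Hn. exists 0. split; [lia|]. exists 0. split; [lia|]. split.
    + apply start_sem; auto.
    + split; [lia|]. split; [lia|]. intros [w [Hw [_ HE]]]. apply Hn.
      exists w. split; [lia|auto].
Qed.

Lemma LA_not E s j : j <= length s -> (LA (notA E) s j <-> ~ LA E s j).
Proof.
  intros Hj. unfold LA, notA; simpl. split.
  - intros [y [Hy [z [Hz [[_ [_ Hn]] He]]]]]. apply end_sem in He.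
    destruct He as [-> ->]. intros [y' [Hy' HE]]. apply Hn.
    exists y'. split; [lia|]. split; auto. apply topstar'; lia.
  - intros Hn. exists (length s). split; [lia|]. exists (length s). split; [lia|]. split.
    + split; [lia|]. split; [lia|]. intros [w [Hw [HE _]]]. apply Hn.
      exists w. split; [lia|auto].
    + apply end_sem; auto.
Qed.

Lemma target_sem B E A s i j :
  sem (RCat (RCat (RLookBehind B) E) (RLookAhead A)) s i j <->
  LB B s i /\ sem E s i j /\ LA A s j.
Proof.
  unfold LB, LA; simpl. split.
  - intros [x [Hx [[z [Hz [[<- [_ HB]] HE]]] [<- [_ HA]]]]].
    split; [exact HB|]. split; [exact HE|exact HA].
  - intros [HB [HE HA]]. pose proof (sem_bound _ _ _ _ HE).
    exists j. split; [lia|]. split.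
    + exists i. split; [lia|]. split; [|exact HE]. split; [reflexivity|]. split; [lia|exact HB].
    + split; [reflexivity|]. split; [lia|exact HA].
Qed.

Lemma T_c : is_REc T.
Proof. unfold T. constructor. constructor. Qed.
Lemma andB_c B1 B2 : is_REc B1 -> is_REc B2 -> is_REc (andB B1 B2).
Proof. intros. unfold andB. repeat constructor; auto; apply T_c. Qed.
Lemma andA_c B1 B2 : is_REc B1 -> is_REc B2 -> is_REc (andA B1 B2).
Proof. intros. unfold andA. repeat constructor; auto; apply T_c. Qed.
Lemma notB_c B1 : is_REc B1 -> is_REc (notB B1).
Proof. intros. unfold notB. apply c_cat; [apply c_start|]. repeat constructor; auto; apply T_c. Qed.
Lemma notA_c B1 : is_REc B1 -> is_REc (notA B1).
Proof. intros. unfold notA. apply c_cat; [|apply c_end]. repeat constructor; auto; apply T_c. Qed.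

End S.
Arguments T {Sigma Alg}. Arguments LB {Sigma Alg}. Arguments LA {Sigma Alg}. Arguments andA {Sigma Alg}. Arguments andB {Sigma Alg}. Arguments notA {Sigma Alg}. Arguments notB {Sigma Alg}.

Theorem theorem1 (Sigma : Type) (Alg : EBA Sigma) (R : regex Alg) :
  is_REsharp R ->
  exists A B E : regex Alg,
    is_REc A /\ is_REc B /\ is_REc E /\
    requiv R (RCat (RCat (RLookBehind B) E) (RLookAhead A)).
Proof.
  induction 1 as [E HE|R1 R2 _ [A1 [B1 [E1 [HA1 [HB1 [HE1 Q1]]]]]] _ [A2 [B2 [E2 [HA2 [HB2 [HE2 Q2]]]]]]
    |E R HE _ [A [B [E' [HA [HB [HE' Q]]]]]]|E R HE _ [A [B [E' [HA [HB [HE' Q]]]]]]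
    |E R HE _ [A [B [E' [HA [HB [HE' Q]]]]]]|E R HE _ [A [B [E' [HA [HB [HE' Q]]]]]]].
  - exists (REps Alg), (REps Alg), E. split; [constructor|]. split; [constructor|]. split; [exact HE|].
    intros s i j. rewrite target_sem. split.
    + intros H. pose proof (sem_bound _ _ _ _ _ _ H). split; [|split; [exact H|]].
      * exists i. simpl. split; [lia|]. split; [reflexivity|lia].
      * exists j. simpl. split; [lia|]. split; [reflexivity|lia].
    + intros [_ [H _]]. exact H.
  - exists (andA A1 A2), (andB B1 B2), (RInter E1 E2).
    split; [apply andA_c; auto|]. split; [apply andB_c; auto|]. split; [constructor; auto|].
    intros s i j. rewrite target_sem. simpl. rewrite (Q1 s i j), (Q2 s i j), !target_sem. split.
    + intros [[b1 [e1 a1]] [b2 [e2 a2]]]. pose proof (sem_bound _ _ _ _ _ _ e1).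
      split; [apply LB_and; auto; lia|]. split; [auto|]. apply LA_and; auto.
    + intros [b [[e1 e2] a]]. pose proof (sem_bound _ _ _ _ _ _ e1).
      apply LB_and in b; [|lia]. apply LA_and in a. tauto.
  - exists A, (andB E B), E'.
    split; [auto|]. split; [apply andB_c; auto|]. split; [auto|].
    intros s i j. rewrite target_sem. simpl. split.
    + intros [x [Hx [[<- [Hl HL]] HR]]]. apply Q in HR. apply target_sem in HR.
      destruct HR as [b [e a]]. split; [apply LB_and; auto|]. auto.
    + intros [b [e a]]. pose proof (sem_bound _ _ _ _ _ _ e).
      apply LB_and in b; [|lia]. destruct b as [b1 b2].
      exists i. split; [lia|]. split; [split; [reflexivity|split; [lia|exact b1]]|].
      apply Q. apply target_sem. auto.
  - exists A, (andB (notB E) B), E'.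
    split; [auto|]. split; [apply andB_c; auto; apply notB_c; auto|]. split; [auto|].
    intros s i j. rewrite target_sem. simpl. split.
    + intros [x [Hx [[<- [Hl HL]] HR]]]. apply Q in HR. apply target_sem in HR.
      destruct HR as [b [e a]]. split; [apply LB_and; auto; split; auto; apply LB_not; auto|]. auto.
    + intros [b [e a]]. pose proof (sem_bound _ _ _ _ _ _ e).
      apply LB_and in b; [|lia]. destruct b as [b1 b2]. apply LB_not in b1; [|lia].
      exists i. split; [lia|]. split; [split; [reflexivity|split; [lia|exact b1]]|].
      apply Q. apply target_sem. auto.
  - exists (andA A E), B, E'.
    split; [apply andA_c; auto|]. split; [auto|]. split; [auto|].
    intros s i j. rewrite target_sem. simpl. split.
    + intros [x [Hx [HR [-> [Hl HL]]]]]. apply Q in HR. apply target_sem in HR.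
      destruct HR as [b [e a]]. split; [auto|]. split; [auto|]. apply LA_and; auto.
    + intros [b [e a]]. pose proof (sem_bound _ _ _ _ _ _ e).
      apply LA_and in a. destruct a as [a1 a2].
      exists j. split; [lia|]. split; [apply Q; apply target_sem; auto|].
      split; [reflexivity|split; [lia|exact a2]].
  - exists (andA A (notA E)), B, E'.
    split; [apply andA_c; auto; apply notA_c; auto|]. split; [auto|]. split; [auto|].
    intros s i j. rewrite target_sem. simpl. split.
    + intros [x [Hx [HR [-> [Hl HL]]]]]. apply Q in HR. apply target_sem in HR.
      destruct HR as [b [e a]]. split; [auto|]. split; [auto|]. apply LA_and; split; auto.
      apply LA_not; auto.
    + intros [b [e a]]. pose proof (sem_bound _ _ _ _ _ _ e).
      apply LA_and in a. destruct a as [a1 a2]. apply LA_not in a2; [|lia].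
      exists j. split; [lia|]. split; [apply Q; apply target_sem; auto|].
      split; [reflexivity|split; [lia|exact a2]].
Qed.
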